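(* Consider the fully discrete finite element scheme described in the context. If $Q_h^{n-1}$ and $Q_h^n$ are trace-free and symmetric (at every point), then $Q_h^{n+1}$ computed by the scheme is trace-free and symmetric.
   Context: Setting: $\Omega\subset\mathbb{R}^d$ ($d\in\{2,3\}$) bounded polygonal/polyhedral (or $C^2$) domain; constants $L_1>0$, $L_2+L_3\ge0$, $a,b\in\mathbb{R}$, $c>0$, $\sigma>0$, $A_0$ a constant such that $\frac a2\operatorname{tr}(Q^2)-\frac b3\operatorname{tr}(Q^3)+\frac c4\operatorname{tr}^2(Q^2)+A_0>0$ for all symmetric trace-free $Q$. $f(Q)=aQ-b[Q^2-\frac1d\operatorname{tr}(Q^2)I]+c\operatorname{tr}(Q^2)Q$, $r(Q)=\sqrt{2(\frac a2\operatorname{tr}(Q^2)-\frac b3\operatorname{tr}(Q^3)+\frac c4\operatorname{tr}^2(Q^2)+A_0)}$, $P(Q)=f(Q)/r(Q)$. Discretization: $\mathfrak T_h$ a conforming shape-regular quasi-uniform triangulation of $\Omega$ with mesh size $h$, interior nodes $z\in\mathcal N^h$ with piecewise linear hat functions $\varphi_z$. $\mathcal S^h=\{W\in H^1_0(\Omega;\mathbb{R}^{d\times d})$: each entry piecewise linear$\}$, $\mathcal T^h=\{U\in H^1_0(\Omega)$: piecewise linear$\}$. $\mathcal I_h$ is nodal piecewise linear interpolation. Mass-lumped inner product: $\langle W^1,W^2\rangle_h=\sum_{z}\gamma_zW^1(z):W^2(z)$, $\gamma_z=\int_\Omega\varphi_z\,dx$, with norm $\|\cdot\|_h$, and similarly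 for scalars. For $W^1,W^2\in\mathcal S^h$, $\langle\alpha(W^1),W^2\rangle_h:=-\int_\Omega\sum_{i,j,k}(\partial_kW^1_{jk}\partial_iW^2_{ij}+\partial_kW^1_{ik}\partial_jW^2_{ij})dx+\frac2d\int_\Omega\sum_{i,j,k,\ell}\partial_\ell W^1_{k\ell}\partial_kW^2_{ij}\delta_{ij}\,dx$. Time step $\Delta t>0$, $D_t^+g^n=(g^{n+1}-g^n)/\Delta t$, $D_t^-g^n=(g^n-g^{n-1})/\Delta t$, $g^{n+1/2}=(g^{n+1}+g^n)/2$, and $\langle\alpha_h^{n+1/2},\Phi\rangle_h:=\frac12(\langle\alpha(Q_h^{n+1}),\Phi\rangle_h+\langle\alpha(Q_h^n),\Phi\rangle_h)$. Scheme: find $Q_h^{n+1}\in\mathcal S^h$, $r_h^{n+1}\in\mathcal T^h$ such that for all $\Phi_h\in\mathcal S^h$, $\psi_h\in\mathcal T^h$: $\langle D_t^+Q_h^n,\Phi_h\rangle_h=-\sigma\langle D_t^-D_t^+Q_h^n,\Phi_h\rangle_h-L_1\langle\nabla Q_h^{n+1/2},\nabla\Phi_h\rangle_{L^2}+\frac{L_2+L_3}{2}\langle\alpha_h^{n+1/2},\Phi_h\rangle_h-\langle r_h^{n+1/2}P(Q_h^n),\Phi_h\rangle_h$, $\langle r_h^{n+1}-r_h^n,\psi_h\rangle_h=\langle P(Q_h^n):(Q_h^{n+1}-Q_h^n),\psi_h\rangle_h$, where the mass-lumped product of the nonlinear terms is evaluated nodewise. *)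

(* Defs.v *)
(* Fully discrete P1 finite element scheme with mass lumping,
   written through nodal values on a simplicial mesh. *)
From HB Require Import structures.
From mathcomp Require Import all_boot all_order all_algebra.
Set Implicit Arguments. Unset Strict Implicit. Unset Printing Implicit Defensive.
Import Order.TTheory GRing.Theory Num.Theory.
Local Open Scope ring_scope.

Record mesh (R : rcfType) (d : nat) := Mesh {
  node : finType;
  elem : finType;
  vert : elem -> 'I_d.+1 -> node;
  pos : node -> 'rV[R]_d;
  interior : pred node }.

Section FE.
Variables (R : rcfType) (d : nat) (M : mesh R d).

Definition Bmat (e : elem M) : 'M[R]_d :=
  \matrix_(i < d, k < d) (pos (vert e (lift ord0 i)) 0 k - pos (vert e ord0) 0 k).

Definition vol (e : elem M) : R := `|\det (Bmat e)| / (d`!)%:R.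

(* gradient (constant on e) of the barycentric coordinate / hat function of
   the j-th vertex of e:  lambda_{i+1}(x) = ((x - x_0) B^{-1})_i,
   lambda_0 = 1 - sum_i lambda_{i+1}. *)
Definition hatgrad (e : elem M) (j : 'I_d.+1) : 'rV[R]_d :=
  match unlift ord0 j with
  | Some i => \row_k (invmx (Bmat e)) k i
  | None => - \sum_(i < d) \row_k (invmx (Bmat e)) k i
  end.

(* k-th partial derivative on e of the piecewise linear function with nodal values u *)
Definition dpart (e : elem M) (u : node M -> R) (k : 'I_d) : R :=
  \sum_(j < d.+1) u (vert e j) * hatgrad e j 0 k.

Definition dpartM (e : elem M) (W : node M -> 'M[R]_d) (i j k : 'I_d) : R :=
  dpart e (fun z => W z i j) k.

Definition inSh (W : node M -> 'M[R]_d) : Prop := forall z, ~~ interior z -> W z = 0.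
Definition inTh (u : node M -> R) : Prop := forall z, ~~ interior z -> u z = 0.

(* gamma_z = int_Omega phi_z dx *)
Definition gamma (z : node M) : R :=
  \sum_(e : elem M | [exists j, vert e j == z]) vol e / (d.+1)%:R.

Definition frob (A B : 'M[R]_d) : R := \sum_(i < d) \sum_(j < d) A i j * B i j.

Definition lumpM (W1 W2 : node M -> 'M[R]_d) : R :=
  \sum_(z : node M | interior z) gamma z * frob (W1 z) (W2 z).
Definition lumpS (u1 u2 : node M -> R) : R :=
  \sum_(z : node M | interior z) gamma z * (u1 z * u2 z).

Definition gradL2 (W1 W2 : node M -> 'M[R]_d) : R :=
  \sum_(e : elem M) vol e *
    \sum_(i < d) \sum_(j < d) \sum_(k < d) dpartM e W1 i j k * dpartM e W2 i j k.

Definition alphaF (W1 W2 : node M -> 'M[R]_d) : R :=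
  \sum_(e : elem M) vol e *
    ( - (\sum_(i < d) \sum_(j < d) \sum_(k < d)
           (dpartM e W1 j k k * dpartM e W2 i j i + dpartM e W1 i k k * dpartM e W2 i j j))
      + 2%:R / d%:R * (\sum_(i < d) \sum_(j < d) \sum_(k < d) \sum_(l < d)
           dpartM e W1 k l l * dpartM e W2 i j k * (i == j)%:R)).

End FE.

Section Bulk.
Variables (R : rcfType) (d : nat) (a b c A0 : R).

Definition trQ2 (Q : 'M[R]_d) : R := \tr (Q *m Q).
Definition trQ3 (Q : 'M[R]_d) : R := \tr (Q *m Q *m Q).

Definition bulk (Q : 'M[R]_d) : R :=
  a / 2%:R * trQ2 Q - b / 3%:R * trQ3 Q + c / 4%:R * (trQ2 Q) ^+ 2 + A0.

Definition fQ (Q : 'M[R]_d) : 'M[R]_d :=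
  a *: Q - b *: (Q *m Q - (d%:R^-1 * trQ2 Q) *: 1%:M) + (c * trQ2 Q) *: Q.

Definition rQ (Q : 'M[R]_d) : R := Num.sqrt (2%:R * bulk Q).

Definition PQ (Q : 'M[R]_d) : 'M[R]_d := (rQ Q)^-1 *: fQ Q.
End Bulk.

(* Main.v *)
Require Import Defs.
From HB Require Import structures.
From mathcomp Require Import all_boot all_order all_algebra.
From mathcomp Require Import ring lra.
From Stdlib Require Import FunctionalExtensionality.
Import Order.TTheory GRing.Theory Num.Theory.
Set Implicit Arguments. Unset Strict Implicit.
Local Open Scope ring_scope.

Section Aux.
Variables (R : rcfType) (d : nat).
Implicit Types (X Y S A B : 'M[R]_d).

Definition Pm X : 'M[R]_d := 2%:R^-1 *: (X - X^T) + (d%:R^-1 * \tr X) *: 1%:M.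
Definition ST X := X^T = X /\ \tr X = 0.

Lemma PmE X a b : Pm X a b = 2%:R^-1 * (X a b - X b a) + d%:R^-1 * \tr X * (a == b)%:R.
Proof. by rewrite /Pm !mxE. Qed.

Lemma frobE A B : frob A B = \sum_i \sum_j A i j * B i j.
Proof. by []. Qed.

Lemma frobDZB (a : R) A B C : frob (a *: A + B) C = a * frob A C + frob B C.
Proof.
rewrite /frob mulr_sumr -big_split /=; apply: eq_bigr => i _.
rewrite mulr_sumr -big_split /=; apply: eq_bigr => j _; rewrite !mxE. ring.
Qed.

Lemma frob0 C : frob (0 : 'M[R]_d) C = 0.
Proof. by rewrite /frob big1 // => i _; rewrite big1 // => j _; rewrite mxE mul0r. Qed.

Lemma frobZ (a : R) A C : frob (a *: A) C = a * frob A C.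
Proof. by have := frobDZB a A 0 C; rewrite addr0 frob0 addr0. Qed.

Lemma frobD A B C : frob (A + B) C = frob A C + frob B C.
Proof. by have := frobDZB 1 A B C; rewrite scale1r mul1r. Qed.

Lemma frobN A C : frob (- A) C = - frob A C.
Proof. by rewrite -scaleN1r frobZ mulN1r. Qed.

Lemma frobB A B C : frob (A - B) C = frob A C - frob B C.
Proof. by rewrite frobD frobN. Qed.

Lemma frobC A B : frob A B = frob B A.
Proof. by rewrite /frob; apply: eq_bigr => i _; apply: eq_bigr => j _; rewrite mulrC. Qed.

Lemma sum_diag (F : 'I_d -> 'I_d -> R) :
  \sum_i \sum_j F i j * (i == j)%:R = \sum_i F i i.
Proof.
apply: eq_bigr => i _; rewrite (bigD1 i) //= eqxx mulr1 big1 ?addr0 // => j.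
by rewrite eq_sym => /negbTE ->; rewrite mulr0.
Qed.

Lemma trE X : \tr X = \sum_i X i i.
Proof. by []. Qed.

Lemma frob_ST_Pm S Y : ST S -> frob S (Pm Y) = 0.
Proof.
move=> [hS htr].
have -> : frob S (Pm Y) = 2%:R^-1 * (\sum_i \sum_j S i j * Y i j - \sum_i \sum_j S i j * Y j i)
   + d%:R^-1 * \tr Y * \sum_i \sum_j S i j * (i == j)%:R.
  rewrite /frob -sumrB mulr_sumr [X in _ + X]mulr_sumr -big_split /=.
  apply: eq_bigr => i _; rewrite -sumrB mulr_sumr [X in _ + X]mulr_sumr -big_split /=.
  by apply: eq_bigr => j _; rewrite PmE; ring.
rewrite sum_diag -trE htr mulr0 addr0.
rewrite [X in _ - X]exchange_big /=.
have -> : \sum_j \sum_i S i j * Y j i = \sum_j \sum_i S j i * Y j i.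
  apply: eq_bigr => j _; apply: eq_bigr => i _.
  by rewrite -{1}hS mxE.
by rewrite subrr mulr0.
Qed.

Lemma trPm X : (d%:R : R) != 0 -> \tr (Pm X) = \tr X.
Proof.
move=> hd; rewrite /Pm raddfD /= !mxtraceZ raddfB /= mxtrace_tr mxtrace1.
by rewrite subrr mulr0 add0r mulrAC mulVf // mul1r.
Qed.

Lemma ST_sub_Pm X : (d%:R : R) != 0 -> ST (X - Pm X).
Proof.
move=> hd; split.
  apply/matrixP => a b; rewrite !mxE (eq_sym b a); field; exact: hd.
have -> : \tr (X - Pm X) = \tr X - \tr (Pm X) by rewrite /mxtrace -sumrB; apply: eq_bigr => i _; rewrite !mxE.
by rewrite trPm // subrr.
Qed.

Lemma frob_Pm X : (d%:R : R) != 0 -> frob X (Pm X) = frob (Pm X) (Pm X).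
Proof.
move=> hd; have -> : X = (X - Pm X) + Pm X by rewrite subrK.
rewrite frobD frob_ST_Pm ?add0r; last exact: ST_sub_Pm.
by rewrite subrK.
Qed.

Lemma frob_ge0 A : 0 <= frob A A.
Proof. by apply: sumr_ge0 => i _; apply: sumr_ge0 => j _; by rewrite -expr2 sqr_ge0. Qed.

Lemma frob_eq0 A : frob A A = 0 -> A = 0.
Proof.
move=> h; apply/matrixP => i j; rewrite mxE.
have hs : forall a b : 'I_d, 0 <= A a b * A a b by move=> a b; rewrite -expr2 sqr_ge0.
have h1 : forall a : 'I_d, true -> 0 <= \sum_(b < d) A a b * A a b.
  by move=> a _; apply: sumr_ge0 => b _; exact: hs.
have h2 := psumr_eq0P h1 h (i:=i) isT.
have h3 : forall b : 'I_d, true -> 0 <= A i b * A i b by move=> b _; exact: hs.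
have := psumr_eq0P h3 h2 (i:=j) isT.
by move/eqP; rewrite -expr2 sqrf_eq0 => /eqP.
Qed.

Lemma Pm0 : Pm 0 = 0.
Proof. by apply/matrixP => a b; rewrite PmE !mxE mxtrace0; ring. Qed.

Lemma trDZ (a : R) X Y : \tr (a *: X + Y) = a * \tr X + \tr Y.
Proof. by rewrite /mxtrace mulr_sumr -big_split /=; apply: eq_bigr => i _; rewrite !mxE. Qed.

Lemma Pm_lin (a : R) X Y : Pm (a *: X + Y) = a *: Pm X + Pm Y.
Proof.
apply/matrixP => i j; rewrite !mxE trDZ; ring.
Qed.

Lemma Pm_sum (I : finType) (g : I -> R) (F : I -> 'M[R]_d) :
  Pm (\sum_i g i *: F i) = \sum_i g i *: Pm (F i).
Proof.
apply: (big_ind2 (fun A B => Pm A = B)) => //; first exact: Pm0.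
  by move=> A1 B1 A2 B2 <- <-; have := Pm_lin 1 A1 A2; rewrite !scale1r.
by move=> i _; have := Pm_lin (g i) (F i) 0; rewrite !addr0 Pm0 addr0.
Qed.

Lemma ST_sum (I : finType) (g : I -> R) (F : I -> 'M[R]_d) :
  (forall i, ST (F i)) -> ST (\sum_i g i *: F i).
Proof.
move=> hF; apply: (big_ind (fun A => ST A)).
- by split; [apply/matrixP => a b; rewrite !mxE | rewrite mxtrace0].
- move=> A B [h1 h2] [h3 h4]; split; last by rewrite raddfD /= h2 h4 addr0.
  have e1 : forall a b, A b a = A a b by move=> a b; rewrite -[in RHS]h1 mxE.
  have e3 : forall a b, B b a = B a b by move=> a b; rewrite -[in RHS]h3 mxE.
  by apply/matrixP => a b; rewrite !mxE e1 e3.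
- move=> i _; have [h1 h2] := hF i; split; last by rewrite mxtraceZ h2 mulr0.
  have e1 : forall a b, F i b a = F i a b by move=> a b; rewrite -[in RHS]h1 mxE.
  by apply/matrixP => a b; rewrite !mxE e1.
Qed.

Lemma Pm_sym X a b : Pm X a b + Pm X b a = 2%:R * (d%:R^-1 * \tr X) * (a == b)%:R.
Proof. rewrite !PmE eq_sym; ring. Qed.

Lemma alpha_zero (x Y : 'I_d -> 'M[R]_d) : (d%:R : R) != 0 ->
 - (\sum_(i < d) \sum_(j < d) \sum_(k < d) (x k j k * Pm (Y i) i j + x k i k * Pm (Y j) i j))
 + 2%:R / d%:R * (\sum_(i < d) \sum_(j < d) \sum_(k < d) \sum_(l < d)
        x l k l * Pm (Y k) i j * (i == j)%:R) = 0.
Proof.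
move=> hd; set v := fun j => \sum_(k < d) x k j k.
have E1 : \sum_(i < d) \sum_(j < d) \sum_(k < d) (x k j k * Pm (Y i) i j + x k i k * Pm (Y j) i j)
   = \sum_i \sum_j v j * Pm (Y i) i j + \sum_i \sum_j v i * Pm (Y j) i j.
  rewrite -big_split /=; apply: eq_bigr => i _; rewrite -big_split /=; apply: eq_bigr => j _.
  by rewrite big_split /= /v !mulr_suml.
have E2 : \sum_i \sum_j v i * Pm (Y j) i j = \sum_i \sum_j v j * Pm (Y i) j i.
  by rewrite exchange_big.
have E3 : \sum_i \sum_j v j * Pm (Y i) i j + \sum_i \sum_j v j * Pm (Y i) j i
   = \sum_i v i * (2%:R * (d%:R^-1 * \tr (Y i))).
  rewrite -big_split -(sum_diag (fun i j => v j * (2%:R * (d%:R^-1 * \tr (Y i))))); apply: eq_bigr => i _; rewrite -big_split /=.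
  apply: eq_bigr => j _; rewrite -mulrDr Pm_sym.
  case: eqP => [->|_]; rewrite ?mulr1 ?mulr0 //.
have E4 : \sum_(i < d) \sum_(j < d) \sum_(k < d) \sum_(l < d) x l k l * Pm (Y k) i j * (i == j)%:R
   = \sum_k v k * \tr (Y k).
  have -> : \sum_(i < d) \sum_(j < d) \sum_(k < d) \sum_(l < d) x l k l * Pm (Y k) i j * (i == j)%:R
     = \sum_(i < d) \sum_(j < d) (\sum_(k < d) v k * Pm (Y k) i j) * (i == j)%:R.
    apply: eq_bigr => i _; apply: eq_bigr => j _; rewrite mulr_suml; apply: eq_bigr => k _.
    by rewrite /v !mulr_suml.
  rewrite sum_diag exchange_big; apply: eq_bigr => k _.
  by rewrite -mulr_sumr -trE trPm.
rewrite E1 E2 E3 E4 mulr_sumr -sumrN -big_split /= big1 // => i _; ring.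
Qed.

End Aux.

Section Aux2.
Variables (R : rcfType) (d : nat).
Implicit Types (X Y S A B : 'M[R]_d).

Lemma trD X Y : \tr (X + Y) = \tr X + \tr Y.
Proof. by rewrite /mxtrace -big_split /=; apply: eq_bigr => i _; rewrite !mxE. Qed.
Lemma trZ (a : R) X : \tr (a *: X) = a * \tr X.
Proof. by rewrite /mxtrace mulr_sumr; apply: eq_bigr => i _; rewrite !mxE. Qed.
Lemma trN X : \tr (- X) = - \tr X.
Proof. by rewrite /mxtrace -sumrN; apply: eq_bigr => i _; rewrite !mxE. Qed.

Lemma ST_scale (a : R) X : ST X -> ST (a *: X).
Proof.
move=> [h1 h2]; split; last by rewrite trZ h2 mulr0.
have e1 : forall i j, X j i = X i j by move=> i j; rewrite -[in RHS]h1 mxE.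
by apply/matrixP => i j; rewrite !mxE e1.
Qed.

Lemma ST_fQ (a b c : R) (Q : 'M[R]_d) : (d%:R : R) != 0 -> ST Q -> ST (fQ a b c Q).
Proof.
move=> hd [h1 h2].
have hP : (Q *m Q)^T = Q *m Q by rewrite trmx_mul h1.
rewrite /fQ /trQ2; move: (Q *m Q) hP => P hP; split.
  have e1 : forall i j, Q j i = Q i j by move=> i j; rewrite -[in RHS]h1 mxE.
  have e2 : forall i j, P j i = P i j by move=> i j; rewrite -[in RHS]hP mxE.
  by apply/matrixP => i j; rewrite !mxE e1 e2 (eq_sym j i).
rewrite !trD trN !trZ trD trN trZ mxtrace1 h2.
by rewrite mulr0 mulr0 addr0 mulrAC mulVf // mul1r subrr mulr0 subr0.
Qed.

End Aux2.

Section FE2.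
Variables (R : rcfType) (d : nat) (M : mesh R d).

Definition D (e : elem M) (W : node M -> 'M[R]_d) (k : 'I_d) : 'M[R]_d :=
  \sum_(j < d.+1) hatgrad e j 0 k *: W (vert e j).

Lemma dpartM_D e W i j k : dpartM e W i j k = D e W k i j.
Proof.
rewrite /dpartM /dpart /D summxE; apply: eq_bigr => l _; rewrite mxE mulrC.
by [].
Qed.

Lemma dpartM_fun e W : dpartM e W = (fun i j k => D e W k i j).
Proof.
apply: functional_extensionality => i; apply: functional_extensionality => j.
apply: functional_extensionality => k; exact: dpartM_D.
Qed.

Lemma D_Pm e (Q : node M -> 'M[R]_d) k : D e (fun z => Pm (Q z)) k = Pm (D e Q k).
Proof. by rewrite /D Pm_sum. Qed.

Lemma D_lin e (a : R) (U V : node M -> 'M[R]_d) k :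
  D e (fun z => a *: (U z + V z)) k = a *: (D e U k + D e V k).
Proof.
rewrite /D -big_split /= scaler_sumr; apply: eq_bigr => j _.
by rewrite !scalerA !scalerDr !scalerA (mulrC a).
Qed.

Lemma D_ST e (Q : node M -> 'M[R]_d) k : (forall z, ST (Q z)) -> ST (D e Q k).
Proof. by move=> h; apply: ST_sum => j; exact: h. Qed.

Lemma gradL2_D W1 W2 : gradL2 W1 W2 = \sum_e vol e * \sum_k frob (D e W1 k) (D e W2 k).
Proof.
apply: eq_bigr => e _; congr (_ * _); rewrite !dpartM_fun.
under eq_bigr => i _ do rewrite exchange_big.
by rewrite exchange_big.
Qed.

Lemma alphaF_zero W (Q : node M -> 'M[R]_d) : (d%:R : R) != 0 ->
  alphaF W (fun z => Pm (Q z)) = 0.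
Proof.
move=> hd; rewrite /alphaF big1 // => e _.
rewrite !dpartM_fun /=.
under eq_bigr => i _ do under eq_bigr => j _ do under eq_bigr => k _ do rewrite !D_Pm.
under [X in _ + _ * X]eq_bigr => i _ do under eq_bigr => j _ do under eq_bigr => k _ do
  under eq_bigr => l _ do rewrite D_Pm.
by rewrite (alpha_zero (D e W) (D e Q) hd) mulr0.
Qed.

End FE2.

Unset Implicit Arguments. Set Strict Implicit.

Theorem lemma4p1 (R : rcfType) (d : nat) (M : mesh R d)
  (L1 L2 L3 a b c sigma A0 dt : R)
  (Qm1 Q0 Q1 : node M -> 'M[R]_d) (r0 r1 : node M -> R) :
  (d = 2%N \/ d = 3%N) ->
  (* mesh: nondegenerate simplices, each interior node is a mesh vertex *)
  (forall e : elem M, \det (Bmat e) != 0) ->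
  (forall z : node M, interior z -> exists e : elem M, exists j, vert e j = z) ->
  (* parameters *)
  0 < L1 -> 0 <= L2 + L3 -> 0 < c -> 0 < sigma -> 0 < dt ->
  (forall Q : 'M[R]_d, Q^T = Q -> \tr Q = 0 -> 0 < bulk a b c A0 Q) ->
  (* unknowns in the discrete spaces *)
  inSh Qm1 -> inSh Q0 -> inSh Q1 -> inTh r0 -> inTh r1 ->
  (* Q^{n-1}, Q^n trace-free and symmetric *)
  (forall z, (Qm1 z)^T = Qm1 z /\ \tr (Qm1 z) = 0) ->
  (forall z, (Q0 z)^T = Q0 z /\ \tr (Q0 z) = 0) ->
  (* the scheme *)
  (forall Phi : node M -> 'M[R]_d, inSh Phi ->
     lumpM (fun z => dt^-1 *: (Q1 z - Q0 z)) Phi =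
       - sigma * lumpM (fun z => (dt ^+ 2)^-1 *: (Q1 z - 2%:R *: Q0 z + Qm1 z)) Phi
       - L1 * gradL2 (fun z => 2%:R^-1 *: (Q1 z + Q0 z)) Phi
       + (L2 + L3) / 2%:R * (2%:R^-1 * (alphaF Q1 Phi + alphaF Q0 Phi))
       - lumpM (fun z => (2%:R^-1 * (r1 z + r0 z)) *: PQ a b c A0 (Q0 z)) Phi) ->
  (forall psi : node M -> R, inTh psi ->
     lumpS (fun z => r1 z - r0 z) psi =
       lumpS (fun z => frob (PQ a b c A0 (Q0 z)) (Q1 z - Q0 z)) psi) ->
  forall z, (Q1 z)^T = Q1 z /\ \tr (Q1 z) = 0.
Proof.
move=> hd hdet hint hL1 hL23 hc hsig hdt hbulk hSm1 hS0 hS1 _ _ hm1 h0 hsch _.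
have hd0 : (d%:R : R) != 0 by case: hd => ->; rewrite pnatr_eq0.
set Phi := fun z => Pm (Q1 z).
have hPhi : inSh Phi by move=> z hz; rewrite /Phi (hS1 z hz) Pm0.
have hvol : forall e : elem M, 0 < vol e.
  move=> e; rewrite /vol divr_gt0 // ?normr_gt0 ?hdet // ltr0n fact_gt0 //.
have hgam0 : forall z : node M, 0 <= gamma z.
  move=> z; rewrite /gamma; apply: sumr_ge0 => e _; apply: divr_ge0; [exact: ltW | exact: ler0n].
have hgam : forall z : node M, interior z -> 0 < gamma z.
  move=> z /hint [e [j hj]]; rewrite /gamma (bigD1 e) /=; last first.
    by apply/existsP; exists j; apply/eqP.
  have h1 : 0 < vol e / (d.+1)%:R by rewrite divr_gt0 // ltr0n.
  apply: (lt_le_trans h1); rewrite lerDl.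
  by apply: sumr_ge0 => i _; apply: divr_ge0; [exact: ltW | exact: ler0n].
set S := \sum_(z | interior z) gamma z * frob (Phi z) (Phi z).
set G := \sum_e vol e * \sum_k frob (Pm (D e Q1 k)) (Pm (D e Q1 k)).
have hS : 0 <= S by apply: sumr_ge0 => z _; apply: mulr_ge0 => //; exact: frob_ge0.
have hG : 0 <= G.
  apply: sumr_ge0 => e _; apply: mulr_ge0; first exact: ltW.
  by apply: sumr_ge0 => k _; exact: frob_ge0.
have T1 : lumpM (fun z => dt^-1 *: (Q1 z - Q0 z)) Phi = dt^-1 * S.
  rewrite /lumpM /S mulr_sumr; apply: eq_bigr => z _.
  rewrite frobZ frobB frob_Pm // (frob_ST_Pm _ (h0 z)) subr0 /Phi; ring.
have T2 : lumpM (fun z => (dt ^+ 2)^-1 *: (Q1 z - 2%:R *: Q0 z + Qm1 z)) Phi = (dt ^+ 2)^-1 * S.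
  rewrite /lumpM /S mulr_sumr; apply: eq_bigr => z _.
  rewrite frobZ frobD frobB frobZ frob_Pm // (frob_ST_Pm _ (h0 z)) (frob_ST_Pm _ (hm1 z)) /Phi.
  ring.
have T3 : gradL2 (fun z => 2%:R^-1 *: (Q1 z + Q0 z)) Phi = 2%:R^-1 * G.
  rewrite gradL2_D /G mulr_sumr; apply: eq_bigr => e _.
  have -> : \sum_k frob (D e (fun z => 2%:R^-1 *: (Q1 z + Q0 z)) k) (D e Phi k)
      = 2%:R^-1 * \sum_k frob (Pm (D e Q1 k)) (Pm (D e Q1 k)).
    rewrite mulr_sumr; apply: eq_bigr => k _.
    rewrite D_lin /Phi D_Pm frobZ frobD frob_Pm // (frob_ST_Pm _ (D_ST e k h0)) addr0 //.
  ring.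
have T4 : alphaF Q1 Phi = 0 by exact: alphaF_zero.
have T4' : alphaF Q0 Phi = 0 by exact: alphaF_zero.
have T5 : lumpM (fun z => (2%:R^-1 * (r1 z + r0 z)) *: PQ a b c A0 (Q0 z)) Phi = 0.
  rewrite /lumpM big1 // => z _; rewrite frobZ frob_ST_Pm ?mulr0 //.
  by apply: ST_scale; apply: ST_fQ => //; exact: h0.
have := hsch Phi hPhi; rewrite T1 T2 T3 T4 T4' T5 addr0 mulr0 mulr0 addr0 subr0.
move=> heq.
have hdti : 0 < dt^-1 by rewrite invr_gt0.
have hdt2 : 0 < (dt ^+ 2)^-1 by rewrite invr_gt0 exprn_gt0.
have hS0' : S = 0.
  have h1 : 0 <= dt^-1 * S by apply: mulr_ge0 => //; exact: ltW.
  have h2 : 0 <= sigma * ((dt ^+ 2)^-1 * S) by apply: mulr_ge0; [exact: ltW| apply: mulr_ge0 => //; exact: ltW].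
  have h3 : 0 <= L1 * (2%:R^-1 * G) by apply: mulr_ge0; [exact: ltW| apply: mulr_ge0 => //; rewrite invr_ge0 ler0n].
  have h4 : dt^-1 * S = 0 by lra.
  by move: h4 => /eqP; rewrite mulf_eq0 invr_eq0 (gt_eqF hdt) /= => /eqP.
move=> z; case: (boolP (interior z)) => hz; last first.
  by rewrite (hS1 z hz) trmx0 mxtrace0.
have hz0 := psumr_eq0P (fun z _ => mulr_ge0 (hgam0 z) (frob_ge0 (Phi z))) hS0' hz.
move: hz0 => /eqP; rewrite mulf_eq0 (gt_eqF (hgam z hz)) /= => /eqP /frob_eq0 hP.
have := ST_sub_Pm (Q1 z) hd0; rewrite -/(Phi z) hP subr0.
by [].
Qed.
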